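(* Let $n \geq 2$ and let $\mathbb{F}_q$ be a finite field. The special unit-digraph on $\operatorname{Mat}_n(\mathbb{F}_q)$ is connected and has diameter $2$. It can be regarded as a simple undirected regular graph (i.e. its connection set $\operatorname{SL}_n(\mathbb{F}_q)$ satisfies $-\operatorname{SL}_n(\mathbb{F}_q)=\operatorname{SL}_n(\mathbb{F}_q)$) if and only if $n$ is even or $\operatorname{char}(\mathbb{F}_q) = 2$. Its adjacency matrix has at most $n+q-1$ distinct eigenvalues.
   Context: The special unit-digraph on $\operatorname{Mat}_n(\mathbb{F}_q)$ is the Cayley digraph $\operatorname{Cay}(\operatorname{Mat}_n(\mathbb{F}_q), \operatorname{SL}_n(\mathbb{F}_q))$: vertex set $\operatorname{Mat}_n(\mathbb{F}_q)$, with a directed edge from $A$ to $B$ iff $\det(B - A) = 1$. *)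

(* Defs.v *)
From HB Require Import structures.
From mathcomp Require Import all_boot all_order all_algebra all_field.
Set Implicit Arguments. Unset Strict Implicit. Unset Printing Implicit Defensive.
Import GRing.Theory.
Local Open Scope ring_scope.

Definition SL_set (F : finFieldType) (n : nat) : {set 'M[F]_n} :=
  [set A : 'M[F]_n | \det A == 1].

Definition su_edge (F : finFieldType) (n : nat) : rel 'M[F]_n :=
  fun A B => \det (B - A) == 1.

Definition walk (T : eqType) (e : rel T) (k : nat) (x y : T) : Prop :=
  exists p : seq T, [/\ size p = k, path e x p & last x p = y].

Definition strongly_connected (T : eqType) (e : rel T) : Prop :=
  forall x y : T, exists k, walk e k x y.

Definition has_diameter (T : eqType) (e : rel T) (d : nat) : Prop :=
  (forall x y : T, exists2 k, (k <= d)%N & walk e k x y) /\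
  (exists x y : T, forall k, (k < d)%N -> ~ walk e k x y).

Definition adj_mx (T : finType) (e : rel T) : 'M[algC]_(#|T|) :=
  \matrix_(i, j) (e (enum_val i) (enum_val j))%:R.

(* Main.v *)
Require Import Defs.
From mathcomp Require Import all_boot all_order all_algebra all_field.
From mathcomp Require Import ring.
Import GRing.Theory.
Set Implicit Arguments. Unset Strict Implicit. Unset Printing Implicit Defensive.
Local Open Scope ring_scope.

Definition cyc (R : comNzRingType) k (d : 'I_k.+1 -> R) (e c : R) : 'M[R]_k.+1 :=
  \matrix_(i, j) if i == j then d i else if (j == i.+1 :> nat) then e
     else if (i == ord_max) && (j == ord0) then c else 0.

Lemma det_cyc (R : comNzRingType) k (d : 'I_k.+1 -> R) (e c : R) : (0 < k)%N ->
  \det (cyc d e c) = \prod_i d i + (-1) ^+ k * e ^+ k * c.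
Proof.
move=> k0.
have bump0 : forall i, bump 0 i = i.+1 by [].
have bumpk : forall i : 'I_k, bump k i = i by move=> i; rewrite /bump leqNgt ltn_ord.
have m0 : (ord_max : 'I_k.+1) != ord0 by rewrite -val_eqE /= -lt0n.
rewrite (expand_det_col _ ord0) (bigD1 ord0) //= (bigD1 ord_max) //=.
rewrite big1 ?addr0; last first.
  move=> i /andP[i0 im]; rewrite !mxE (negPf i0) (negPf im) /=.
  by rewrite mul0r.
rewrite !mxE eqxx (negPf m0) eqxx /=.
rewrite /cofactor /= expr0 mul1r addn0.
congr (_ + _).
  rewrite -det_tr det_trig; last first.
    apply/is_trig_mxP => i j ij; rewrite !mxE -!val_eqE /=.
    rewrite !bump0 eqSS (gtn_eqF ij) eqSS andbF.
    by have -> : (i == j.+1 :> nat) = false by apply/negbTE; rewrite neq_ltn ltnS ltnW.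
  rewrite big_ord_recl; congr (_ * _).
  apply: eq_bigr => i _; rewrite !mxE eqxx //.
rewrite [RHS]mulrC; congr (_ * _); congr (_ * _).
rewrite det_trig; last first.
  apply/is_trig_mxP => i j ij; rewrite !mxE -!val_eqE /= bump0 !bumpk.
  by rewrite (ltn_eqF (ltn_trans ij (ltnSn _))) eqSS (gtn_eqF ij) andbF.
rewrite (eq_bigr (fun _ => e)) ?prodr_const ?card_ord //.
move=> i _; rewrite !mxE -!val_eqE /= bump0 !bumpk.
by rewrite (ltn_eqF (ltnSn _)) eqxx.
Qed.

Lemma diag_split (F : fieldType) k (D : 'M[F]_k.+2) (u v : F) :
  (forall i j, i != j -> D i j = 0) -> D 0 0 != 0 ->
  exists X, \det X = u /\ \det (D - X) = v.
Proof.
move=> Dd D0.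
pose c := (-1) ^+ k.+1 * u.
pose y := (v + c) / D 0 0.
pose d := fun i : 'I_k.+2 => if i == ord0 then 0 else
   if (i == 1 :> nat) then D i i - y else D i i - 1.
exists (cyc d 1 c); split.
  rewrite det_cyc // (bigD1 ord0) //= /d eqxx mul0r add0r expr1n mulr1.
  by rewrite /c signrMK.
have -> : D - cyc d 1 c = cyc (fun i => D i i - d i) (-1) (-c).
  apply/matrixP => i j; rewrite !mxE; case: eqP => [->//|/eqP ij].
  rewrite (Dd _ _ ij) sub0r.
  case: ifP => _; first by [].
  by case: ifP => _; rewrite ?oppr0.
rewrite det_cyc // !big_ord_recl big1; last first.
  move=> i _; rewrite /d.
  have -> : (lift ord0 (lift ord0 i) == ord0) = false by [].
  have -> : (lift ord0 (lift ord0 i) == 1 :> nat) = false by [].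
  by rewrite opprB addrC subrK.
rewrite /d eqxx subr0.
have -> : (lift ord0 (ord0 : 'I_k.+1) == ord0) = false by [].
have -> : (lift ord0 (ord0 : 'I_k.+1) == 1 :> nat) = true by [].
rewrite subKr mulr1.
rewrite -exprMn mulrN1 opprK expr1n mul1r.
rewrite /y mulrCA mulfV // mulr1 /c.
by rewrite addrK.
Qed.

Lemma sum_two_SL (F : fieldType) k (M : 'M[F]_k.+2) : M != 0 ->
  exists X, \det X = 1 /\ \det (M - X) = 1.
Proof.
move=> M0.
set L := col_ebase M; set U := row_ebase M.
have hL : \det L != 0 by rewrite -unitfE -unitmxE col_ebase_unit.
have hU : \det U != 0 by rewrite -unitfE -unitmxE row_ebase_unit.
have r0 : (0 < \rank M)%N by rewrite lt0n mxrank_eq0.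
pose t := (\det L * \det U)^-1.
have Dd : forall i j, i != j -> (pid_mx (\rank M) : 'M[F]_k.+2) i j = 0.
  by move=> i j; rewrite mxE -val_eqE => /negPf ->.
have D0 : (pid_mx (\rank M) : 'M[F]_k.+2) 0 0 != 0 by rewrite mxE eqxx r0 oner_eq0.
have [X0 [h1 h2]] := diag_split t t Dd D0.
exists (L *m X0 *m U); split.
  by rewrite !det_mulmx h1 /t mulrAC mulfV // mulf_neq0.
rewrite -{1}(mulmx_ebase M) -/L -/U -mulmxBl -mulmxBr !det_mulmx h2.
by rewrite /t mulrAC mulfV // mulf_neq0.
Qed.

Definition cls (F : finFieldType) k (M : 'M[F]_k.+2) :
    ('I_k.+2 + {x : F | x != 0})%type :=
  match insub (\det M) with Some d => inr d | None => inl (inord (\rank M)) end.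

Lemma rank_lt (F : fieldType) k (M : 'M[F]_k.+2) : \det M = 0 -> (\rank M < k.+2)%N.
Proof.
move=> d0; rewrite ltn_neqAle rank_leq_row andbT.
apply/negP => /eqP h.
have : row_free M by rewrite /row_free h.
by rewrite row_free_unit unitmxE d0 unitfE eqxx.
Qed.

Lemma cls_equiv (F : finFieldType) k (M M' : 'M[F]_k.+2) : cls M = cls M' ->
  exists P Q, \det P * \det Q = 1 /\ M' = P *m M *m Q.
Proof.
rewrite /cls; case: insubP => [d dn0 dd|dz]; case: insubP => [d' dn0' dd'|dz'] //.
  move=> [] eqd; move: dd'; rewrite -eqd dd => eqdet.
  have Mu : M \in unitmx by rewrite unitmxE unitfE.
  exists (M' *m invmx M), 1; split; last by rewrite mulmxKV // mulmx1.
  by rewrite det1 mulr1 det_mulmx det_inv -eqdet mulfV.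
move=> [] /(congr1 val); rewrite /= !inordK ?rank_lt //; last 2 first.
- by apply/eqP; rewrite negbK in dz'.
- by apply/eqP; rewrite negbK in dz.
move=> er.
set L := col_ebase M; set U := row_ebase M.
set L' := col_ebase M'; set U' := row_ebase M'.
have hL : \det L != 0 by rewrite -unitfE -unitmxE col_ebase_unit.
have hU : \det U != 0 by rewrite -unitfE -unitmxE row_ebase_unit.
have hL' : \det L' != 0 by rewrite -unitfE -unitmxE col_ebase_unit.
have hU' : \det U' != 0 by rewrite -unitfE -unitmxE row_ebase_unit.
pose t := \det L * \det U / (\det L' * \det U').
pose Dl := diag_mx (\row_j (if j == ord_max then t else 1) : 'rV[F]_k.+2).
have rlt : (\rank M < k.+2)%N by apply: rank_lt; apply/eqP; rewrite negbK in dz.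
have pD : (pid_mx (\rank M) : 'M[F]_k.+2) *m Dl = pid_mx (\rank M).
  apply/matrixP => i j; rewrite mul_mx_diag !mxE.
  case: ifP => [/eqP ->|_]; last by rewrite mulr1.
  rewrite [_ && _](_ : _ = false) ?mul0r //.
  apply/negbTE; rewrite negb_and; case: eqP => //= ->.
  by rewrite -leqNgt.
have Lu : L \in unitmx by apply: col_ebase_unit.
have Uu : U \in unitmx by apply: row_ebase_unit.
exists (L' *m invmx L), (invmx U *m Dl *m U'); split.
  rewrite !det_mulmx !det_inv det_diag (bigD1 ord_max) //= big1; last first.
    by move=> i /negPf hi; rewrite mxE hi.
  rewrite mxE eqxx mulr1 /t; field.
  by rewrite hL hL' hU hU'.
rewrite -{1}(mulmx_ebase M') -/L' -/U' -er.
rewrite -{2}(mulmx_ebase M) -/L -/U.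
rewrite !mulmxA mulmxKV //.
rewrite mulmxK // -[L' *m _ *m Dl]mulmxA pD //.
Qed.
Lemma eig_bound N (A : 'M[algC]_N) K (E : 'M[algC]_(K, N * N)) :
  (forall m, (mxvec (A ^+ m) <= E)%MS) ->
  exists s : seq algC, (size s <= K)%N /\ forall a, eigenvalue A a -> a \in s.
Proof.
case: N A E => [|N] A E H.
  exists [::]; split => // a.
  by rewrite /eigenvalue /= thinmx0 eqxx.
have hd : (degree_mxminpoly A <= K)%N.
  rewrite /degree_mxminpoly; case: ex_minnP => d _ hmin; apply: hmin.
  apply: leq_trans (rank_leq_row E); apply: mxrankS.
  by apply/row_subP => i; rewrite rowK.
have [r hr] := closed_field_poly_normal (mxminpoly A).
move: hr; rewrite (monicP (mxminpoly_monic A)) scale1r => hr.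
exists r; split.
  by have := size_mxminpoly A; rewrite hr size_prod_XsubC => -[->].
by move=> a; rewrite eigenvalue_root_min hr root_prod_XsubC.
Qed.

Section Adj.
Variables (F : finFieldType) (k : nat).
Local Notation T := 'M[F]_k.+2.
Local Notation N := #|{: T}|.
Local Notation A := (adj_mx (@su_edge F k.+2)).
Local Notation v := (@enum_val T (mem T)).

Lemma adjE i j : A i j = (\det (v j - v i) == 1)%:R.
Proof. by rewrite mxE. Qed.

Lemma adj_pow_inv (P Q : T) : \det P * \det Q = 1 -> forall m i j i' j',
  v j' - v i' = P *m (v j - v i) *m Q -> (A ^+ m) i j = (A ^+ m) i' j'.
Proof.
move=> hPQ.
have sub1 : forall a b : T, a + b - a = b by move=> a b; rewrite addrC addKr.
have sub3 : forall a b : T, a + (b - a) = b by move=> a b; rewrite addrC subrK.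
have sub2 : forall a b c : T, (a - c) - (b - c) = a - b by move=> a b c; rewrite opprB addrA subrK.
have Pu : P \in unitmx by rewrite unitmxE unitfE; apply/eqP => h; move: hPQ; rewrite h mul0r => /eqP; rewrite eq_sym oner_eq0.
have Qu : Q \in unitmx by rewrite unitmxE unitfE; apply/eqP => h; move: hPQ; rewrite h mulr0 => /eqP; rewrite eq_sym oner_eq0.
elim=> [|m IH] i j i' j' hij.
  rewrite !expr0 !mxE; suff -> : (i == j) = (i' == j') by [].
  apply/idP/idP => /eqP e.
    by move: hij; rewrite e subrr mulmx0 mul0mx => /eqP; rewrite subr_eq0 => /eqP /enum_val_inj ->.
  move: hij; rewrite e subrr => /(congr1 (fun X => invmx P *m X *m invmx Q)).
  rewrite mulmx0 mul0mx !mulmxA mulVmx // mul1mx mulmxK // => /esym /eqP.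
  by rewrite subr_eq0 => /eqP /enum_val_inj ->.
rewrite !exprS -!mulmxE !mxE.
pose h l := enum_rank (v i' + P *m (v l - v i) *m Q).
pose h' l := enum_rank (v i + invmx P *m (v l - v i') *m invmx Q).
rewrite [RHS](reindex h); last first.
  exists h' => l _; rewrite /h /h' !enum_rankK.
    by rewrite sub1 !mulmxA mulVmx // mul1mx mulmxK // sub3 enum_valK.
  rewrite (sub1 (enum_val i)).
  by rewrite !mulmxA mulmxV // mul1mx mulmxKV // sub3 enum_valK.
apply: eq_bigr => l _; rewrite /h !adjE !enum_rankK sub1.
rewrite !det_mulmx mulrAC hPQ mul1r; congr (_ * _).
apply: IH; rewrite enum_rankK opprD addrA hij -mulmxBl -mulmxBr; congr (_ *m _ *m _).
by rewrite sub2.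
Qed.

Local Notation C := ('I_k.+2 + {x : F | x != 0})%type.
Definition Eg (g : C) : 'M[algC]_N := \matrix_(i, j) (cls (v j - v i) == g)%:R.
Definition Emat : 'M[algC]_(#|{: C}|, N * N) :=
  \matrix_(g < #|{: C}|) mxvec (Eg (enum_val g)).

Lemma pow_in_E m : (mxvec (A ^+ m) <= Emat)%MS.
Proof.
pose f (g : C) : algC := if [pick ij : 'I_N * 'I_N | cls (v ij.2 - v ij.1) == g]
  is Some ij then (A ^+ m) ij.1 ij.2 else 0.
have hf : forall i j, f (cls (v j - v i)) = (A ^+ m) i j.
  move=> i j; rewrite /f; case: pickP => [[i' j'] /eqP /= hc | /(_ (i, j)) /=]; last by rewrite eqxx.
  have [P [Q [hPQ e]]] := cls_equiv hc.
  apply: (@adj_pow_inv P Q hPQ m i' j' i j).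
  exact: e.
have -> : A ^+ m = \sum_(g < #|{: C}|) f (enum_val g) *: Eg (enum_val g).
  apply/matrixP => i j; rewrite summxE.
  rewrite (bigD1 (enum_rank (cls (v j - v i)))) //= big1 ?addr0.
    by rewrite !mxE enum_rankK eqxx mulr1 hf.
  move=> g hg; rewrite !mxE; case: eqP => [e|]; last by rewrite mulr0.
  by move: hg; rewrite e enum_valK eqxx.
rewrite linear_sum /=; apply: summx_sub => g _.
rewrite linearZ /=; apply: scalemx_sub.
by rewrite -[mxvec _](rowK (fun g => mxvec (Eg (enum_val g)))) row_sub.
Qed.
End Adj.

Lemma sign_iff (F : fieldType) n :
  ((-1) ^+ n = 1 :> F) <-> (~~ odd n \/ 2 \in [pchar F]).
Proof.
rewrite -signr_odd; case: (odd n) => /=; split.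
- move=> h; right; rewrite inE /=; apply/eqP.
  by rewrite mulr2n -{1}h addNr.
- by case => // h2; rewrite expr1; apply: (oppr_pchar2 h2).
- by left.
- by rewrite expr0.
Qed.

Lemma detN_gen (F : fieldType) n (A : 'M[F]_n) : \det (- A) = (-1) ^+ n * \det A.
Proof. by rewrite -scaleN1r detZ. Qed.

Lemma deltaE (F : fieldType) k : \det (delta_mx 0 0 : 'M[F]_k.+2) = 0.
Proof.
rewrite (expand_det_row _ ord_max) big1 // => j _.
by rewrite mxE mul0r.
Qed.

Unset Implicit Arguments.
Theorem corollary3p11 (F : finFieldType) (n : nat) (hn : (2 <= n)%N) :
  [/\ strongly_connected (@su_edge F n),
      has_diameter (@su_edge F n) 2,
      ([set - A | A in SL_set F n] = SL_set F n <-> (~~ odd n \/ 2 \in [pchar F])),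
      ((forall A B : 'M[F]_n, su_edge A B = su_edge B A) <->
         (~~ odd n \/ 2 \in [pchar F]))
    & exists s : seq algC, (size s <= n + #|F| - 1)%N /\
        (forall a : algC, eigenvalue (adj_mx (@su_edge F n)) a -> a \in s)].
Proof.
case: n hn => [|[|k]] // _.
have diam1 : forall x y : 'M[F]_k.+2, exists2 m, (m <= 2)%N & walk (@su_edge F k.+2) m x y.
  move=> x y; have [->|xy] := eqVneq x y.
    by exists 0%N => //; exists [::].
  have M0 : y - x != 0 by rewrite subr_eq0 eq_sym.
  have [X [h1 h2]] := sum_two_SL M0.
  exists 2%N => //; exists [:: x + X; y]; split => //=.
  rewrite /su_edge (addrC x X) addrK h1 opprD addrA addrAC h2.
  by apply/and3P; split => //; apply/eqP.
split.
- by move=> x y; have [m _ h] := diam1 x y; exists m.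
- split => //; exists 0, (delta_mx 0 0) => m.
  case: m => [_|[_|//]] [p [hs hp hl]].
    move: hs hl; case: p {hp} => //= _ /(congr1 (fun M : 'M[F]_k.+2 => M 0 0)).
    rewrite !mxE /=.
    by move/eqP; rewrite eq_sym oner_eq0.
  move: hs hp hl; case: p => [|z [|//]] //= _; rewrite andbT => hz hl.
  by move: hz; rewrite hl /su_edge subr0 deltaE eq_sym oner_eq0.
- split.
    move=> h; apply/sign_iff.
    have : (- 1 : 'M[F]_k.+2) \in SL_set F k.+2.
      by rewrite -h; apply/imsetP; exists 1 => //; rewrite inE det1.
    by rewrite inE detN_gen det1 mulr1 => /eqP.
  move/sign_iff => s; apply/setP => A; rewrite inE.
  apply/imsetP/idP => [[B hB ->]|hA].
    by rewrite detN_gen s mul1r; rewrite inE in hB.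
  by exists (- A); rewrite ?opprK // inE detN_gen s mul1r.
- split.
    move=> h; apply/sign_iff; move: (h 0 1); rewrite /su_edge subr0 det1 eqxx.
    by rewrite sub0r detN_gen det1 mulr1 => /esym /eqP.
  move/sign_iff => s A B; rewrite /su_edge -opprB detN_gen s mul1r //.
- have [s [hs hin]] := eig_bound (@pow_in_E F k).
  exists s; split => //.
  apply: leq_trans hs _.
  rewrite card_sum card_ord card_sig cardC1.
  have : (0 < #|F|)%N by apply/card_gt0P; exists 0.
  by case: #|F| => // q _; rewrite addnS /= subn1.
Qed.
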